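(* Let $(R,1_R)$ be a unital Riesz space. Then, for every pseudo MV-algebra $M$, every $(R,1_R)$-state-morphism on $M$ has a kernel which is a maximal ideal of $M$, if and only if $(R,1_R)$ is isomorphic (as a unital Riesz space) to $(\mathbb R,1)$.
   Context: Pseudo MV-algebra: an algebra $(M;\oplus,{}^-,{}^\sim,0,1)$, $0\neq1$, satisfying the standard pseudo MV-algebra axioms; equivalently (up to isomorphism) $M=\Gamma(G,u)=[0,u]$ for a unital $\ell$-group $(G,u)$ with $x\oplus y=(x+y)\wedge u$, $x^-=u-x$, $x^\sim=-x+u$. Ideal: nonempty down-set closed under $\oplus$; maximal = maximal among proper ideals. A unital Riesz space $(R,1_R)$ is a Riesz space with a fixed strong unit $1_R$; $\Gamma(R,1_R)$ is the MV-algebra on $[0,1_R]$. An $(R,1_R)$-state-morphism on $M$ is a pseudo MV-algebra homomorphism $s:M\to\Gamma(R,1_R)$, with kernel $\mathrm{Ker}(s)=\{x:s(x)=0\}$. *)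

(* Defs.v *)
From Stdlib Require Import Reals.
Open Scope R_scope.

(** * Pseudo MV-algebras (Georgescu--Iorgulescu axioms) *)
Record PMV := {
  pm_car :> Type;
  pm_add : pm_car -> pm_car -> pm_car;
  pm_neg : pm_car -> pm_car;
  pm_til : pm_car -> pm_car;
  pm_zero : pm_car;
  pm_one : pm_car;
  pm_mul := fun x y => pm_til (pm_add (pm_neg x) (pm_neg y));
  pm_A1 : forall x y z, pm_add x (pm_add y z) = pm_add (pm_add x y) z;
  pm_A2l : forall x, pm_add x pm_zero = x;
  pm_A2r : forall x, pm_add pm_zero x = x;
  pm_A3l : forall x, pm_add x pm_one = pm_one;
  pm_A3r : forall x, pm_add pm_one x = pm_one;
  pm_A4a : pm_til pm_one = pm_zero;
  pm_A4b : pm_neg pm_one = pm_zero;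
  pm_A5 : forall x y, pm_til (pm_add (pm_neg x) (pm_neg y))
                      = pm_neg (pm_add (pm_til x) (pm_til y));
  pm_A6a : forall x y, pm_add x (pm_mul (pm_til x) y) = pm_add y (pm_mul (pm_til y) x);
  pm_A6b : forall x y, pm_add y (pm_mul (pm_til y) x) = pm_add (pm_mul x (pm_neg y)) y;
  pm_A6c : forall x y, pm_add (pm_mul x (pm_neg y)) y = pm_add (pm_mul y (pm_neg x)) x;
  pm_A7 : forall x y, pm_mul x (pm_add (pm_neg x) y) = pm_mul (pm_add x (pm_til y)) y;
  pm_A8 : forall x, pm_til (pm_neg x) = x;
  pm_nontriv : pm_zero <> pm_one
}.

Definition pm_le (M : PMV) (x y : M) : Prop := pm_add M (pm_neg M x) y = pm_one M.

Definition pm_ideal (M : PMV) (I : M -> Prop) : Prop :=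
  (exists x, I x) /\
  (forall x y : M, pm_le M x y -> I y -> I x) /\
  (forall x y, I x -> I y -> I (pm_add M x y)).

Definition pm_proper (M : PMV) (I : M -> Prop) : Prop := exists x, ~ I x.

Definition pm_maximal_ideal (M : PMV) (I : M -> Prop) : Prop :=
  pm_ideal M I /\ pm_proper M I /\
  forall J : M -> Prop, pm_ideal M J -> pm_proper M J ->
    (forall x, I x -> J x) -> forall x, J x -> I x.

Record Riesz := {
  rs_car :> Type;
  rs_add : rs_car -> rs_car -> rs_car;
  rs_zero : rs_car;
  rs_opp : rs_car -> rs_car;
  rs_scal : R -> rs_car -> rs_car;
  rs_le : rs_car -> rs_car -> Prop;
  rs_join : rs_car -> rs_car -> rs_car;
  rs_meet : rs_car -> rs_car -> rs_car;
  rs_addA : forall x y z, rs_add x (rs_add y z) = rs_add (rs_add x y) z;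
  rs_addC : forall x y, rs_add x y = rs_add y x;
  rs_add0 : forall x, rs_add rs_zero x = x;
  rs_addN : forall x, rs_add (rs_opp x) x = rs_zero;
  rs_scalDr : forall a x y, rs_scal a (rs_add x y) = rs_add (rs_scal a x) (rs_scal a y);
  rs_scalDl : forall a b x, rs_scal (a + b) x = rs_add (rs_scal a x) (rs_scal b x);
  rs_scalA : forall a b x, rs_scal (a * b) x = rs_scal a (rs_scal b x);
  rs_scal1 : forall x, rs_scal 1 x = x;
  rs_le_refl : forall x, rs_le x x;
  rs_le_anti : forall x y, rs_le x y -> rs_le y x -> x = y;
  rs_le_trans : forall x y z, rs_le x y -> rs_le y z -> rs_le x z;
  rs_le_add : forall x y z, rs_le x y -> rs_le (rs_add x z) (rs_add y z);
  rs_le_scal : forall a x y, 0 <= a -> rs_le x y -> rs_le (rs_scal a x) (rs_scal a y);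
  rs_join_l : forall x y, rs_le x (rs_join x y);
  rs_join_r : forall x y, rs_le y (rs_join x y);
  rs_join_lub : forall x y z, rs_le x z -> rs_le y z -> rs_le (rs_join x y) z;
  rs_meet_l : forall x y, rs_le (rs_meet x y) x;
  rs_meet_r : forall x y, rs_le (rs_meet x y) y;
  rs_meet_glb : forall x y z, rs_le z x -> rs_le z y -> rs_le z (rs_meet x y)
}.

Definition strong_unit (V : Riesz) (u : V) : Prop :=
  rs_le V (rs_zero V) u /\
  forall x : V, exists n : nat, rs_le V x (rs_scal V (INR n) u).

(** (V,u)-state-morphism: a pseudo MV-homomorphism M -> Gamma(V,u), where
    Gamma(V,u) = [0,u] with x(+)y = (x+y)/\u and x^- = x^~ = u - x. *)
Definition state_morphism (V : Riesz) (u : V) (M : PMV) (s : M -> V) : Prop :=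
  (forall x, rs_le V (rs_zero V) (s x) /\ rs_le V (s x) u) /\
  (forall x y, s (pm_add M x y) = rs_meet V (rs_add V (s x) (s y)) u) /\
  (forall x, s (pm_neg M x) = rs_add V u (rs_opp V (s x))) /\
  (forall x, s (pm_til M x) = rs_add V u (rs_opp V (s x))) /\
  s (pm_zero M) = rs_zero V /\
  s (pm_one M) = u.

Definition kernel (V : Riesz) (M : PMV) (s : M -> V) : M -> Prop :=
  fun x => s x = rs_zero V.

Definition unital_iso_to_reals (V : Riesz) (u : V) : Prop :=
  exists f : V -> R,
    (forall x y, f (rs_add V x y) = f x + f y) /\
    (forall a x, f (rs_scal V a x) = a * f x) /\
    (forall x y, f (rs_join V x y) = Rmax (f x) (f y)) /\
    (forall x y, f (rs_meet V x y) = Rmin (f x) (f y)) /\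
    (forall x y, f x = f y -> x = y) /\
    (forall r : R, exists x, f x = r) /\
    f u = 1.

(* Main.v *)
Require Import Defs.
From Stdlib Require Import Reals Lra Classical ProofIrrelevance ClassicalEpsilon.
Open Scope R_scope.

Notation "x +v y" := (rs_add _ x y) (at level 50, left associativity).
Notation "x <=v y" := (rs_le _ x y) (at level 70).
Notation "a *v x" := (rs_scal _ a x) (at level 40).
Notation vopp := (rs_opp _).
Notation v0 := (rs_zero _).
Notation vjoin := (rs_join _).
Notation vmeet := (rs_meet _).



Lemma addr0 {V : Riesz} (x : V) : x +v v0 = x.
Proof. rewrite rs_addC; apply rs_add0. Qed.
Lemma addrN {V : Riesz} (x : V) : x +v vopp x = v0.
Proof. rewrite rs_addC; apply rs_addN. Qed.
Lemma scal0 {V : Riesz} (x : V) : 0 *v x = v0.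
Proof.
  assert (H : 0 *v x +v 0 *v x = 0 *v x +v v0).
  { rewrite <- rs_scalDl, addr0; f_equal; ring. }
  assert (H2 := f_equal (fun z => vopp (0 *v x) +v z) H). simpl in H2.
  rewrite !rs_addA, rs_addN, !rs_add0 in H2. exact H2.
Qed.
Lemma scalN {V : Riesz} (r : R) (x : V) : (- r) *v x = vopp (r *v x).
Proof.
  assert (H : (-r) *v x +v r *v x = v0).
  { rewrite <- rs_scalDl. replace (-r + r) with 0 by ring. apply scal0. }
  assert (H2 := f_equal (fun z => z +v vopp (r *v x)) H). simpl in H2.
  rewrite <- rs_addA, addrN, addr0, rs_add0 in H2. exact H2.
Qed.
Lemma oppD {V : Riesz} (x y : V) : vopp (x +v y) = vopp x +v vopp y.
Proof.
  rewrite <- (rs_scal1 _ (x +v y)), <- scalN, rs_scalDr, !scalN, !rs_scal1. reflexivity.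
Qed.
Lemma scalr0 {V : Riesz} (r : R) : r *v (v0 : V) = v0.
Proof. rewrite <- (scal0 (v0 : V)), <- rs_scalA, Rmult_0_r. reflexivity. Qed.
Lemma addACA {V : Riesz} (a b c d : V) : (a +v b) +v (c +v d) = (a +v c) +v (b +v d).
Proof.
  rewrite !rs_addA. f_equal. rewrite <- !rs_addA. f_equal. apply rs_addC.
Qed.

Inductive gexp := GAt (i : nat) | GZ | GA (a b : gexp) | GO (a : gexp) | GS (r : R) (a : gexp).
Definition env4 {V : Riesz} (a b c d : V) (i : nat) : V :=
  match i with 0 => a | 1 => b | 2 => c | 3 => d | _ => v0 end.
Fixpoint gev {V : Riesz} (env : nat -> V) (e : gexp) : V :=
  match e with
  | GAt i => env i | GZ => v0 | GA a b => gev env a +v gev env b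
  | GO a => vopp (gev env a) | GS r a => r *v gev env a end.
Fixpoint gco (e : gexp) (i : nat) : R :=
  match e with
  | GAt j => if Nat.eqb j i then 1 else 0 | GZ => 0
  | GA a b => gco a i + gco b i | GO a => - gco a i | GS r a => r * gco a i end.
Definition lin {V : Riesz} (env : nat -> V) (c : nat -> R) : V :=
  c 0%nat *v env 0%nat +v (c 1%nat *v env 1%nat +v (c 2%nat *v env 2%nat +v c 3%nat *v env 3%nat)).

Lemma eval_lin {V : Riesz} (a b c d : V) e : gev (env4 a b c d) e = lin (env4 a b c d) (gco e).
Proof.
  unfold lin; induction e as [j| |e1 IH1 e2 IH2|e IH|r e IH]; simpl.
  - destruct j as [|[|[|[|j]]]]; simpl; rewrite ?scal0, ?rs_scal1, ?rs_add0, ?addr0; reflexivity.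
  - rewrite !scal0, !rs_add0. reflexivity.
  - rewrite IH1, IH2, !rs_scalDl, addACA; f_equal; rewrite addACA; f_equal; apply addACA.
  - rewrite IH, !oppD, !scalN. reflexivity.
  - rewrite IH, !rs_scalDr, !rs_scalA. reflexivity.
Qed.

Lemma lin_ext {V : Riesz} (env : nat -> V) c1 c2 :
  c1 0%nat = c2 0%nat -> c1 1%nat = c2 1%nat -> c1 2%nat = c2 2%nat -> c1 3%nat = c2 3%nat ->
  lin env c1 = lin env c2.
Proof. unfold lin; intros -> -> -> ->; reflexivity. Qed.

Ltac reify a b c d t :=
  lazymatch t with
  | rs_add _ ?x ?y => let rx := reify a b c d x in let ry := reify a b c d y in constr:(GA rx ry)
  | rs_opp _ ?x => let rx := reify a b c d x in constr:(GO rx)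
  | rs_scal _ ?r ?x => let rx := reify a b c d x in constr:(GS r rx)
  | rs_zero _ => constr:(GZ)
  | _ => lazymatch constr:((t, a)) with (?x, ?x) => constr:(GAt 0) | _ =>
         lazymatch constr:((t, b)) with (?x, ?x) => constr:(GAt 1) | _ =>
         lazymatch constr:((t, c)) with (?x, ?x) => constr:(GAt 2) | _ =>
         lazymatch constr:((t, d)) with (?x, ?x) => constr:(GAt 3) end end end end
  end.

Ltac gsolve4 a b c d :=
  lazymatch goal with |- ?l = ?r =>
    let rl := reify a b c d l in let rr := reify a b c d r in
    change (gev (env4 a b c d) rl = gev (env4 a b c d) rr);
    rewrite !eval_lin; apply lin_ext; simpl; first [ring | field | idtac]
  end.
Tactic Notation "gsolve" constr(a) := gsolve4 a a a a.
Tactic Notation "gsolve" constr(a) constr(b) := gsolve4 a b b b.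
Tactic Notation "gsolve" constr(a) constr(b) constr(c) := gsolve4 a b c c.
Tactic Notation "gsolve" constr(a) constr(b) constr(c) constr(d) := gsolve4 a b c d.

Lemma le_addr {V : Riesz} (x y z : V) : x <=v y -> z +v x <=v z +v y.
Proof. intros H; rewrite (rs_addC _ z x), (rs_addC _ z y); apply rs_le_add, H. Qed.
Lemma le_add2 {V : Riesz} (a b c d : V) : a <=v b -> c <=v d -> a +v c <=v b +v d.
Proof. intros H1 H2; eapply rs_le_trans; [apply rs_le_add, H1| apply le_addr, H2]. Qed.
Lemma le_eq {V : Riesz} (a b c d : V) : a = c -> b = d -> c <=v d -> a <=v b.
Proof. intros -> ->; auto. Qed.
Lemma le_cancel {V : Riesz} (x y z : V) : x +v z <=v y +v z -> x <=v y.
Proof. intros H. apply (rs_le_add _ _ _ (vopp z)) in H. revert H; apply le_eq; gsolve x y z. Qed.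
Lemma le_opp {V : Riesz} (x y : V) : x <=v y -> vopp y <=v vopp x.
Proof. intros H. apply (rs_le_add _ _ _ (vopp x +v vopp y)) in H. revert H; apply le_eq; gsolve x y. Qed.
Lemma le_sub0 {V : Riesz} (x y : V) : x <=v y -> v0 <=v y +v vopp x.
Proof. intros H. apply (rs_le_add _ _ _ (vopp x)) in H. revert H; apply le_eq; gsolve x y. Qed.
Lemma scal_nonneg {V : Riesz} (a : R) (x : V) : 0 <= a -> v0 <=v x -> v0 <=v a *v x.
Proof. intros Ha Hx. rewrite <- (scalr0 a). apply rs_le_scal; auto. Qed.
Lemma scal_le {V : Riesz} (a b : R) (x : V) : a <= b -> v0 <=v x -> a *v x <=v b *v x.
Proof.
  intros Hab Hx. assert (H := scal_nonneg (b - a) x ltac:(lra) Hx).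
  apply (le_addr _ _ (a *v x)) in H. revert H; apply le_eq; gsolve x.
Qed.

Lemma meet_idl {V : Riesz} (a b : V) : a <=v b -> vmeet a b = a.
Proof. intros H; apply rs_le_anti; [apply rs_meet_l| apply rs_meet_glb; auto using rs_le_refl]. Qed.
Lemma meet_idr {V : Riesz} (a b : V) : b <=v a -> vmeet a b = b.
Proof. intros H; apply rs_le_anti; [apply rs_meet_r| apply rs_meet_glb; auto using rs_le_refl]. Qed.
Lemma join_idl {V : Riesz} (a b : V) : a <=v b -> vjoin a b = b.
Proof. intros H; apply rs_le_anti; [apply rs_join_lub; auto using rs_le_refl|apply rs_join_r]. Qed.
Lemma join_idr {V : Riesz} (a b : V) : b <=v a -> vjoin a b = a.
Proof. intros H; apply rs_le_anti; [apply rs_join_lub; auto using rs_le_refl|apply rs_join_l]. Qed.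
Lemma meetC {V : Riesz} (a b : V) : vmeet a b = vmeet b a.
Proof. apply rs_le_anti; apply rs_meet_glb; auto using rs_meet_l, rs_meet_r. Qed.
Lemma joinC {V : Riesz} (a b : V) : vjoin a b = vjoin b a.
Proof. apply rs_le_anti; apply rs_join_lub; auto using rs_join_l, rs_join_r. Qed.
Lemma meetA {V : Riesz} (a b c : V) : vmeet a (vmeet b c) = vmeet (vmeet a b) c.
Proof.
  apply rs_le_anti; repeat apply rs_meet_glb;
  eauto using rs_meet_l, rs_meet_r, rs_le_trans.
Qed.
Lemma meetDr {V : Riesz} (a b c : V) : vmeet a b +v c = vmeet (a +v c) (b +v c).
Proof.
  apply rs_le_anti.
  - apply rs_meet_glb; apply rs_le_add; auto using rs_meet_l, rs_meet_r.
  - apply (le_cancel _ _ (vopp c)).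
    replace (vmeet a b +v c +v vopp c) with (vmeet a b) by gsolve (vmeet a b) c.
    apply rs_meet_glb.
    + replace a with (a +v c +v vopp c) at 2 by gsolve a c. apply rs_le_add, rs_meet_l.
    + replace b with (b +v c +v vopp c) at 2 by gsolve b c. apply rs_le_add, rs_meet_r.
Qed.
Lemma joinDr {V : Riesz} (a b c : V) : vjoin a b +v c = vjoin (a +v c) (b +v c).
Proof.
  apply rs_le_anti.
  - apply (le_cancel _ _ (vopp c)).
    replace (vjoin a b +v c +v vopp c) with (vjoin a b) by gsolve (vjoin a b) c.
    apply rs_join_lub.
    + replace a with (a +v c +v vopp c) at 1 by gsolve a c. apply rs_le_add, rs_join_l.
    + replace b with (b +v c +v vopp c) at 1 by gsolve b c. apply rs_le_add, rs_join_r.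
  - apply rs_join_lub; apply rs_le_add; auto using rs_join_l, rs_join_r.
Qed.
Lemma oppI {V : Riesz} (a b : V) : vopp (vmeet a b) = vjoin (vopp a) (vopp b).
Proof.
  apply rs_le_anti.
  - apply (le_cancel _ _ (vmeet a b +v vopp (vjoin (vopp a) (vopp b)))).
    replace (vopp (vmeet a b) +v (vmeet a b +v vopp (vjoin (vopp a) (vopp b))))
      with (vopp (vjoin (vopp a) (vopp b))) by gsolve (vmeet a b) (vjoin (vopp a) (vopp b)).
    replace (vjoin (vopp a) (vopp b) +v (vmeet a b +v vopp (vjoin (vopp a) (vopp b))))
      with (vmeet a b) by gsolve (vmeet a b) (vjoin (vopp a) (vopp b)).
    apply rs_meet_glb.
    + replace a with (vopp (vopp a)) at 2 by gsolve a. apply le_opp, rs_join_l.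
    + replace b with (vopp (vopp b)) at 2 by gsolve b. apply le_opp, rs_join_r.
  - apply rs_join_lub; apply le_opp; auto using rs_meet_l, rs_meet_r.
Qed.
Lemma joinDl {V : Riesz} (a b c : V) : c +v vjoin a b = vjoin (c +v a) (c +v b).
Proof. rewrite rs_addC, joinDr, (rs_addC _ a), (rs_addC _ b); reflexivity. Qed.
Lemma meetDl {V : Riesz} (a b c : V) : c +v vmeet a b = vmeet (c +v a) (c +v b).
Proof. rewrite rs_addC, meetDr, (rs_addC _ a), (rs_addC _ b); reflexivity. Qed.

Lemma K1 {V : Riesz} (u p : V) : u +v vopp (vmeet p u) = vjoin (u +v vopp p) v0.
Proof. rewrite oppI, joinDl, addrN. reflexivity. Qed.
Lemma Mulv {V : Riesz} (u a b : V) :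
  u +v vopp (vmeet ((u +v vopp a) +v (u +v vopp b)) u) = vjoin (a +v b +v vopp u) v0.
Proof. rewrite K1. f_equal. gsolve u a b. Qed.
Lemma Jx {V : Riesz} (u x y : V) : x <=v u -> y <=v u ->
  vmeet (x +v vjoin (y +v vopp x) v0) u = vjoin x y.
Proof.
  intros Hx Hy. rewrite joinDl, addr0.
  replace (x +v (y +v vopp x)) with y by gsolve x y.
  rewrite meet_idl. apply joinC. apply rs_join_lub; auto.
Qed.
Lemma trunc {V : Riesz} (u p x : V) : v0 <=v x -> vmeet (vmeet p u +v x) u = vmeet (p +v x) u.
Proof.
  intros Hx. rewrite meetDr, <- meetA. f_equal. apply meet_idr.
  replace u with (u +v v0) at 1 by apply addr0. apply le_addr, Hx.
Qed.

Definition GT (V : Riesz) (u : V) := {x : V | v0 <=v x /\ x <=v u}.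

Lemma sval_inj {V : Riesz} {u : V} (x y : GT V u) : proj1_sig x = proj1_sig y -> x = y.
Proof. destruct x, y; simpl; intros ->; f_equal; apply proof_irrelevance. Qed.


Definition Gadd {V : Riesz} {u : V} (x y : GT V u) : GT V u.
Proof.
  refine (exist _ (vmeet (proj1_sig x +v proj1_sig y) u) _).
  destruct x as [x [Hx1 Hx2]], y as [y [Hy1 Hy2]]; simpl. split.
  - apply rs_meet_glb; [|eapply rs_le_trans; eauto].
    rewrite <- (rs_add0 _ v0) at 1. apply le_add2; auto.
  - apply rs_meet_r.
Defined.
Definition Gneg {V : Riesz} {u : V} (x : GT V u) : GT V u.
Proof.
  refine (exist _ (u +v vopp (proj1_sig x)) _).
  destruct x as [x [Hx1 Hx2]]; simpl. split.
  - apply le_sub0, Hx2.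
  - rewrite <- (addr0 u) at 2. apply le_addr. replace v0 with (vopp (v0 : V)) by gsolve u.
    apply le_opp, Hx1.
Defined.
Definition Gzero {V : Riesz} {u : V} (Hu : v0 <=v u) : GT V u :=
  exist _ v0 (conj (rs_le_refl _ _) Hu).
Definition Gone {V : Riesz} {u : V} (Hu : v0 <=v u) : GT V u :=
  exist _ u (conj Hu (rs_le_refl _ _)).

Ltac gd := repeat match goal with x : GT _ _ |- _ => let H1 := fresh "H" in let H2 := fresh "H" in destruct x as [x [H1 H2]] end; apply sval_inj; simpl.

Lemma GA1 {V : Riesz} {u : V} (x y z : GT V u) : Gadd x (Gadd y z) = Gadd (Gadd x y) z.
Proof.
  gd. rewrite (rs_addC _ x), !trunc; auto. f_equal. gsolve x y z.
Qed.
Lemma GA2l {V : Riesz} {u : V} (Hu : v0 <=v u) (x : GT V u) : Gadd x (Gzero Hu) = x.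
Proof. gd. rewrite addr0. apply meet_idl; auto. Qed.
Lemma GA2r {V : Riesz} {u : V} (Hu : v0 <=v u) (x : GT V u) : Gadd (Gzero Hu) x = x.
Proof. gd. rewrite rs_add0. apply meet_idl; auto. Qed.
Lemma GA3l {V : Riesz} {u : V} (Hu : v0 <=v u) (x : GT V u) : Gadd x (Gone Hu) = Gone Hu.
Proof. gd. apply meet_idr. rewrite <- (rs_add0 _ u) at 1. apply rs_le_add; auto. Qed.
Lemma GA3r {V : Riesz} {u : V} (Hu : v0 <=v u) (x : GT V u) : Gadd (Gone Hu) x = Gone Hu.
Proof. gd. apply meet_idr. rewrite <- (addr0 u) at 1. apply le_addr; auto. Qed.
Lemma GA4 {V : Riesz} {u : V} (Hu : v0 <=v u) : Gneg (Gone Hu) = Gzero Hu.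
Proof. gd. apply addrN. Qed.
Lemma GA8 {V : Riesz} {u : V} (x : GT V u) : Gneg (Gneg x) = x.
Proof. gd. gsolve u x. Qed.
Lemma GA6a {V : Riesz} {u : V} (x y : GT V u) :
  Gadd x (Gneg (Gadd (Gneg (Gneg x)) (Gneg y))) = Gadd y (Gneg (Gadd (Gneg (Gneg y)) (Gneg x))).
Proof.
  gd. rewrite !Mulv.
  replace (u +v vopp x +v y +v vopp u) with (y +v vopp x) by gsolve u x y.
  replace (u +v vopp y +v x +v vopp u) with (x +v vopp y) by gsolve u x y.
  rewrite !Jx; auto. apply joinC.
Qed.
Lemma GA6b {V : Riesz} {u : V} (x y : GT V u) :
  Gadd y (Gneg (Gadd (Gneg (Gneg y)) (Gneg x))) = Gadd (Gneg (Gadd (Gneg x) (Gneg (Gneg y)))) y.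
Proof.
  gd. rewrite !Mulv.
  replace (u +v vopp y +v x +v vopp u) with (x +v vopp y) by gsolve u x y.
  replace (x +v (u +v vopp y) +v vopp u) with (x +v vopp y) by gsolve u x y.
  rewrite (rs_addC _ (vjoin _ _) y). reflexivity.
Qed.
Lemma GA6c {V : Riesz} {u : V} (x y : GT V u) :
  Gadd (Gneg (Gadd (Gneg x) (Gneg (Gneg y)))) y = Gadd (Gneg (Gadd (Gneg y) (Gneg (Gneg x)))) x.
Proof.
  gd. rewrite !Mulv.
  replace (x +v (u +v vopp y) +v vopp u) with (x +v vopp y) by gsolve u x y.
  replace (y +v (u +v vopp x) +v vopp u) with (y +v vopp x) by gsolve u x y.
  rewrite (rs_addC _ (vjoin _ _) y), (rs_addC _ (vjoin _ _) x), !Jx; auto. apply joinC.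
Qed.
Lemma GA7 {V : Riesz} {u : V} (x y : GT V u) :
  Gneg (Gadd (Gneg x) (Gneg (Gadd (Gneg x) y))) = Gneg (Gadd (Gneg (Gadd x (Gneg y))) (Gneg y)).
Proof.
  gd. rewrite !Mulv.
  replace (x +v vmeet (u +v vopp x +v y) u +v vopp u)
    with (vmeet (u +v vopp x +v y) u +v (x +v vopp u)) by gsolve (vmeet (u +v vopp x +v y) u) x u.
  replace (vmeet (x +v (u +v vopp y)) u +v y +v vopp u)
    with (vmeet (x +v (u +v vopp y)) u +v (y +v vopp u)) by gsolve (vmeet (x +v (u +v vopp y)) u) y u.
  rewrite !meetDr.
  replace (u +v vopp x +v y +v (x +v vopp u)) with y by gsolve u x y.
  replace (u +v (x +v vopp u)) with x by gsolve u x y.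
  replace (x +v (u +v vopp y) +v (y +v vopp u)) with x by gsolve u x y.
  replace (u +v (y +v vopp u)) with y by gsolve u x y.
  rewrite !join_idr by (apply rs_meet_glb; auto). apply meetC.
Qed.

Definition GPMV {V : Riesz} {u : V} (Hu : v0 <=v u) (Hn : v0 <> u) : PMV :=
  Build_PMV (GT V u) Gadd Gneg Gneg (Gzero Hu) (Gone Hu)
    GA1 (GA2l Hu) (GA2r Hu) (GA3l Hu) (GA3r Hu) (GA4 Hu) (GA4 Hu)
    (fun x y => eq_refl) GA6a GA6b GA6c GA7 GA8
    (fun e => Hn (f_equal (@proj1_sig _ _) e)).

Lemma G_sm {V : Riesz} {u : V} (Hu : v0 <=v u) (Hn : v0 <> u) :
  state_morphism V u (GPMV Hu Hn) (@proj1_sig _ _).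
Proof.
  split; [intros [x0 [H1 H2]]; simpl; split; assumption|]. repeat split; reflexivity.
Qed.

Lemma simple_step {V : Riesz} (u : V) (Hu : v0 <=v u) (Hn : v0 <> u)
  (H : forall (M : PMV) (s : M -> V), state_morphism V u M s -> pm_maximal_ideal M (kernel V M s)) :
  forall v, v0 <=v v -> v <=v u -> v <> v0 -> exists n : nat, u <=v INR n *v v.
Proof.
  intros v Hv1 Hv2 Hv0.
  destruct (H _ _ (G_sm Hu Hn)) as [_ [_ Hmax]].
  set (J := fun z : GPMV Hu Hn => exists n : nat, proj1_sig z <=v INR n *v v).
  assert (HJ : pm_ideal _ J).
  { split; [|split].
    - exists (Gzero Hu). exists 0%nat. simpl. rewrite scal0. apply rs_le_refl.
    - intros x y Hxy [n Hn']. exists n. eapply rs_le_trans; [|exact Hn'].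
      unfold pm_le in Hxy. change (Gadd (Gneg x) y = Gone Hu) in Hxy. apply (f_equal (@proj1_sig _ _)) in Hxy. simpl in Hxy.
      destruct x as [x [Hx1 Hx2]], y as [y [Hy1 Hy2]]; simpl in *.
      assert (Hle : u <=v u +v vopp x +v y) by (rewrite <- Hxy at 1; apply rs_meet_l).
      apply (rs_le_add _ _ _ (x +v vopp u)) in Hle. revert Hle; apply le_eq; gsolve u x y.
    - intros x y [n Hn1] [m Hm1]. exists (n + m)%nat. simpl.
      eapply rs_le_trans; [apply rs_meet_l|].
      rewrite plus_INR, rs_scalDl. apply le_add2; auto. }
  destruct (classic (pm_proper _ J)) as [Hp|Hp].
  - exfalso. apply Hv0.
    assert (Hx : J (exist _ v (conj Hv1 Hv2))) by (exists 1%nat; simpl; rewrite rs_scal1; apply rs_le_refl).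
    apply (Hmax J HJ Hp) in Hx; [exact Hx|].
    intros x Hk. exists 0%nat. unfold kernel in Hk. simpl in Hk. rewrite Hk, scal0. apply rs_le_refl.
  - destruct (classic (J (Gone Hu))) as [[n Hn1]|HJ1]; [exists n; exact Hn1|].
    exfalso; apply Hp; exists (Gone Hu); exact HJ1.
Qed.

Lemma pos_le0 {V : Riesz} (a : R) (x : V) : 0 < a -> a *v x <=v v0 -> x <=v v0.
Proof.
  intros Ha H. apply (rs_le_scal _ (/ a)) in H; [|left; apply Rinv_0_lt_compat; auto].
  rewrite <- rs_scalA, scalr0, Rinv_l, rs_scal1 in H; auto. lra.
Qed.
Lemma le_scal_diff {V : Riesz} (r t : R) (x : V) : r *v x <=v t *v x -> (r - t) *v x <=v v0.
Proof.
  intros H. apply (rs_le_add _ _ _ (vopp (t *v x))) in H. revert H; apply le_eq; gsolve x.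
Qed.
Lemma scal_le_inv {V : Riesz} (u : V) (Hu : v0 <=v u) (Hn : v0 <> u) r t :
  r *v u <=v t *v u -> r <= t.
Proof.
  intros H. destruct (Rle_or_lt r t) as [|Hlt]; auto. exfalso.
  apply le_scal_diff, pos_le0 in H; [|lra]. apply Hn, rs_le_anti; auto.
Qed.
Lemma scal_inj {V : Riesz} (u : V) (Hu : v0 <=v u) (Hn : v0 <> u) r t :
  r *v u = t *v u -> r = t.
Proof.
  intros H. apply Rle_antisym; eapply scal_le_inv; eauto; rewrite H; apply rs_le_refl.
Qed.

Lemma small_zero {V : Riesz} (u : V) (Hu : v0 <=v u) (Hn : v0 <> u)
  (S : forall v, v0 <=v v -> v <=v u -> v <> v0 -> exists n : nat, u <=v INR n *v v) :
  forall w, v0 <=v w -> (forall e, 0 < e -> w <=v e *v u) -> w = v0.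
Proof.
  intros w Hw He. apply NNPP; intros Hw0.
  assert (Hwu : w <=v u) by (rewrite <- (rs_scal1 _ u); apply He; lra).
  destruct (S w Hw Hwu Hw0) as [n Hn1].
  assert (Hn0 := pos_INR n).
  set (e := / (2 * (INR n + 1))).
  assert (He0 : 0 < e) by (unfold e; apply Rinv_0_lt_compat; lra).
  assert (H2 := rs_le_scal _ (INR n) _ _ Hn0 (He e He0)).
  rewrite <- rs_scalA in H2.
  assert (H3 := rs_le_trans _ _ _ _ Hn1 H2).
  rewrite <- (rs_scal1 _ u) in H3 at 1.
  apply le_scal_diff, pos_le0 in H3.
  - apply Hn, rs_le_anti; auto.
  - unfold e. apply Rlt_Rminus. apply (Rmult_lt_reg_r (2 * (INR n + 1))); [lra|].
    rewrite Rmult_assoc, Rinv_l; lra.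
Qed.

Lemma pos_big {V : Riesz} (u : V) (Hu : strong_unit V u) (Hn : v0 <> u)
  (S : forall v, v0 <=v v -> v <=v u -> v <> v0 -> exists n : nat, u <=v INR n *v v) :
  forall y, v0 <=v y -> y <> v0 -> exists e, 0 < e /\ e *v u <=v y.
Proof.
  intros y Hy Hy0. destruct Hu as [Hu0 Hu]. destruct (Hu y) as [m Hm].
  assert (Hm0 := pos_INR m). set (k := INR m + 1).
  assert (Hk : 0 < k) by (unfold k; lra).
  set (v := / k *v y).
  assert (Hv1 : v0 <=v v) by (apply scal_nonneg; auto; left; apply Rinv_0_lt_compat; auto).
  assert (Hv2 : v <=v u).
  { eapply rs_le_trans. apply rs_le_scal; [left; apply Rinv_0_lt_compat; auto| exact Hm].
    rewrite <- rs_scalA. rewrite <- (rs_scal1 _ u) at 2. apply scal_le; auto.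
    apply (Rmult_le_reg_l k); auto. rewrite <- Rmult_assoc, Rinv_r by lra. unfold k; lra. }
  assert (Hv0 : v <> v0).
  { intros E. apply Hy0. replace y with (k *v v) by (unfold v; rewrite <- rs_scalA; rewrite Rinv_r by lra; apply rs_scal1).
    rewrite E; apply scalr0. }
  destruct (S v Hv1 Hv2 Hv0) as [n Hn1].
  destruct (Req_dec (INR n) 0) as [E|E].
  - exfalso. rewrite E, scal0 in Hn1. apply Hn, rs_le_anti; auto.
  - assert (Hn0 : 0 < INR n) by (assert (H := pos_INR n); lra).
    exists (k / INR n). split; [apply Rdiv_lt_0_compat; auto|].
    apply (rs_le_scal _ (k / INR n)) in Hn1; [|left; apply Rdiv_lt_0_compat; auto].
    eapply rs_le_trans; [exact Hn1|]. unfold v. rewrite <- !rs_scalA.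
    match goal with |- rs_le _ (rs_scal _ ?c _) _ => replace c with 1 by (field; lra) end. rewrite rs_scal1. apply rs_le_refl.
Qed.

Lemma repr {V : Riesz} (u : V) (Hu : strong_unit V u) (Hn : v0 <> u)
  (S : forall v, v0 <=v v -> v <=v u -> v <> v0 -> exists n : nat, u <=v INR n *v v) :
  forall x, exists c, x = c *v u.
Proof.
  intros x. destruct Hu as [Hu0 Hu].
  set (E := fun r => r *v u <=v x).
  assert (Hb : bound E).
  { destruct (Hu x) as [m Hm]. exists (INR m). intros r Hr.
    eapply scal_le_inv; eauto. eapply rs_le_trans; eauto. }
  assert (Hne : exists r, E r).
  { destruct (Hu (vopp x)) as [m Hm]. exists (- INR m). unfold E.
    apply le_opp in Hm. revert Hm; apply le_eq; gsolve x u. }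
  destruct (completeness E Hb Hne) as [c [Hc1 Hc2]].
  set (y := x +v vopp (c *v u)).
  assert (Ha : forall e, 0 < e -> vopp (e *v u) <=v y).
  { intros e He. destruct (classic (is_upper_bound E (c - e))) as [Hub|Hub].
    - apply Hc2 in Hub. lra.
    - apply not_all_ex_not in Hub. destruct Hub as [r Hr].
      apply imply_to_and in Hr. destruct Hr as [Hr1 Hr2].
      assert (H1 : (c - e) *v u <=v x).
      { eapply rs_le_trans; [|exact Hr1]. apply scal_le; auto. lra. }
      apply (rs_le_add _ _ _ (vopp (c *v u))) in H1. revert H1; apply le_eq; unfold y; gsolve u x. }
  assert (Hb2 : forall e, 0 < e -> ~ (e *v u <=v y)).
  { intros e He H1. apply (rs_le_add _ _ _ (c *v u)) in H1.
    assert (H2 : E (c + e)) by (unfold E; revert H1; apply le_eq; unfold y; gsolve u x).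
    apply Hc1 in H2. lra. }
  assert (Hw : vjoin (vopp y) v0 = v0).
  { apply (small_zero u Hu0 Hn S).
    - apply rs_join_r.
    - intros e He. apply rs_join_lub.
      + assert (H := le_opp _ _ (Ha e He)). revert H; apply le_eq; [reflexivity|gsolve u].
      + apply scal_nonneg; auto; lra. }
  assert (Hy : v0 <=v y).
  { assert (H := rs_join_l _ (vopp y) v0). rewrite Hw in H. apply le_opp in H.
    revert H; apply le_eq; gsolve y. }
  destruct (classic (y = v0)) as [Hy0|Hy0].
  - exists c. replace x with (y +v c *v u) by (unfold y; gsolve x u). rewrite Hy0. apply rs_add0.
  - destruct (pos_big u (conj Hu0 Hu) Hn S y Hy Hy0) as [e [He1 He2]].
    exfalso; exact (Hb2 e He1 He2).
Qed.

Definition BPMV : PMV.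
Proof.
  refine (Build_PMV bool orb negb negb false true _ _ _ _ _ _ _ _ _ _ _ _ _ ltac:(discriminate));
  intros; repeat match goal with b : bool |- _ => destruct b end; reflexivity.
Defined.

Lemma forward {V : Riesz} (u : V) (Hu : strong_unit V u)
  (H : forall (M : PMV) (s : M -> V), state_morphism V u M s -> pm_maximal_ideal M (kernel V M s)) :
  unital_iso_to_reals V u.
Proof.
  destruct (classic (v0 = u)) as [E|Hn].
  - exfalso.
    assert (Hs : state_morphism V u BPMV (fun _ => v0)).
    { rewrite <- E. repeat split; try apply rs_le_refl; try reflexivity.
      - intros. rewrite rs_add0. symmetry; apply meet_idl, rs_le_refl.
      - intros. rewrite addrN. reflexivity.
      - intros. rewrite addrN. reflexivity. }
    destruct (H _ _ Hs) as [_ [[x Hx] _]]. apply Hx. reflexivity.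
  - assert (Hu0 : v0 <=v u) by apply Hu.
    assert (S := simple_step u Hu0 Hn H).
    assert (Rp := repr u Hu Hn S).
    set (f := fun x => proj1_sig (constructive_indefinite_description _ (Rp x))).
    assert (Hf : forall x, x = f x *v u) by (intros x; unfold f; destruct constructive_indefinite_description; auto).
    assert (Uq : forall x a, x = a *v u -> f x = a).
    { intros x a Ha. apply (scal_inj u Hu0 Hn). rewrite <- Hf. auto. }
    exists f. split; [|split; [|split; [|split; [|split; [|split]]]]].
    + intros x y. apply Uq. rewrite rs_scalDl, <- !Hf. reflexivity.
    + intros a x. apply Uq. rewrite rs_scalA, <- Hf. reflexivity.
    + intros x y. apply Uq. rewrite (Hf x), (Hf y) at 1. unfold Rmax. destruct (Rle_dec (f x) (f y)).
      * apply join_idl, scal_le; auto.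
      * apply join_idr, scal_le; auto; lra.
    + intros x y. apply Uq. rewrite (Hf x), (Hf y) at 1. unfold Rmin. destruct (Rle_dec (f x) (f y)).
      * apply meet_idl, scal_le; auto.
      * apply meet_idr, scal_le; auto; lra.
    + intros x y Exy. rewrite (Hf x), (Hf y), Exy. reflexivity.
    + intros r. exists (r *v u). apply Uq. reflexivity.
    + apply Uq. symmetry; apply rs_scal1.
Qed.

Fixpoint itr (M : PMV) (x : M) (k : nat) : M :=
  match k with O => x | S k => pm_add M x (itr M x k) end.

Lemma pm_negK (M : PMV) (z : M) : pm_add M (pm_neg M z) z = pm_one M.
Proof.
  assert (H := pm_A6c M z (pm_one M)). rewrite pm_A3l in H. rewrite H.
  unfold pm_mul. rewrite pm_A4b, pm_A2r, pm_A8. reflexivity.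
Qed.

Lemma backward {V : Riesz} (u : V) (Hiso : unital_iso_to_reals V u) :
  forall (M : PMV) (s : M -> V), state_morphism V u M s -> pm_maximal_ideal M (kernel V M s).
Proof.
  destruct Hiso as [f [fadd [fscal [fjoin [fmeet [finj [fsurj fu]]]]]]].
  intros M s [sb [sadd [sneg [stil [s0 s1]]]]].
  assert (f0 : f v0 = 0).
  { assert (E := fadd v0 v0). rewrite rs_add0 in E. lra. }
  assert (fopp : forall x, f (vopp x) = - f x).
  { intros x. assert (E := fadd (vopp x) x). rewrite rs_addN, f0 in E. lra. }
  assert (fmono : forall x y, x <=v y -> f x <= f y).
  { intros x y Hxy. rewrite <- (join_idl _ _ Hxy), fjoin. apply Rmax_l. }
  set (g := fun x => f (s x)).
  assert (gadd : forall x y, g (pm_add M x y) = Rmin (g x + g y) 1).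
  { intros x y. unfold g. rewrite sadd, fmeet, fadd, fu. reflexivity. }
  assert (gneg : forall x, g (pm_neg M x) = 1 - g x).
  { intros x. unfold g. rewrite sneg, fadd, fopp, fu. ring. }
  assert (gb : forall x, 0 <= g x <= 1).
  { intros x. unfold g. rewrite <- f0, <- fu. destruct (sb x); split; apply fmono; auto. }
  assert (g1 : g (pm_one M) = 1) by (unfold g; rewrite s1; auto).
  assert (kerg : forall x, kernel V M s x <-> g x = 0).
  { intros x; unfold kernel, g; split; intros E.
    - rewrite E; auto.
    - apply finj. rewrite f0; auto. }
  assert (Hid : pm_ideal M (kernel V M s)).
  { split; [|split].
    - exists (pm_zero M). exact s0.
    - intros x y Hxy Hy. apply kerg. apply kerg in Hy. unfold pm_le in Hxy.
      apply (f_equal g) in Hxy. rewrite gadd, gneg, g1, Hy in Hxy.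
      specialize (gb x). unfold Rmin in Hxy. destruct Rle_dec; lra.
    - intros x y Hx Hy. apply kerg. apply kerg in Hx. apply kerg in Hy.
      rewrite gadd, Hx, Hy. unfold Rmin; destruct Rle_dec; lra. }
  split; [exact Hid| split].
  - exists (pm_one M). intros E. apply kerg in E. lra.
  - intros J [_ [Jdown Jadd]] [z0 Hz0] Hsub x Jx.
    apply kerg. apply NNPP; intros Ha.
    set (a := g x).
    assert (Ha0 : 0 < a) by (specialize (gb x); unfold a; lra).
    assert (Hit : forall k, J (itr M x k) /\ g (itr M x k) = Rmin (INR (S k) * a) 1).
    { induction k as [|k [IH1 IH2]]; simpl itr.
      - split; auto. simpl. replace (1 * a) with a by ring. unfold Rmin; destruct Rle_dec; unfold a in *; specialize (gb x); lra.
      - split; auto. rewrite gadd, IH2. fold a. rewrite (S_INR (S k)).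
        unfold Rmin; repeat destruct Rle_dec; lra. }
    destruct (archimed_cor1 a Ha0) as [N [HN1 HN2]].
    assert (HN : 1 < INR N * a).
    { assert (0 < INR N) by (apply lt_0_INR; auto).
      apply (Rmult_lt_compat_l (INR N)) in HN1; auto. rewrite Rinv_r in HN1; lra. }
    destruct (Hit N) as [Jz gz].
    set (z := itr M x N) in *.
    assert (gz1 : g z = 1).
    { rewrite gz, S_INR. unfold Rmin; destruct Rle_dec; lra. }
    assert (Jnz : J (pm_neg M z)).
    { apply Hsub, kerg. rewrite gneg, gz1. ring. }
    assert (J1 : J (pm_one M)) by (rewrite <- (pm_negK M z); apply Jadd; auto).
    apply Hz0. apply (Jdown z0 (pm_one M)); auto. apply pm_A3l.
Qed.

Theorem proposition3p20 (V : Riesz) (u : V) (Hu : strong_unit V u) :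
  (forall (M : PMV) (s : M -> V),
     state_morphism V u M s -> pm_maximal_ideal M (kernel V M s))
  <-> unital_iso_to_reals V u.
Proof.
  split; [apply forward; auto | apply backward].
Qed.
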